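(* Let $G\neq 1$ be a finite solvable group. Then $G$ satisfies $\mathcal{H}_{\mathrm{r}(G)}$. In particular, if $p$ is a prime and $G$ is a $p$-group with $|G/\Phi(G)|=p^2$, then $G$ satisfies $\mathcal{H}_2$.
   Context: For a positive integer $k$, a finite group $G$ satisfies property $\mathcal{H}_k$ if there exists a set $\mathcal{C}$ of conjugacy classes of $G$ with $|\mathcal{C}|\le k$ such that every non-linear ($\chi(1)>1$) irreducible complex character of $G$ vanishes (takes the value $0$) on at least one class in $\mathcal{C}$. For $G$ solvable, the Fitting series is defined by $\mathbf{F}_0(G)=1$, $\mathbf{F}_1(G)=\mathbf{F}(G)$ (the Fitting subgroup), and $\mathbf{F}_i(G)/\mathbf{F}_{i-1}(G)=\mathbf{F}(G/\mathbf{F}_{i-1}(G))$ for $i\ge 2$; the Fitting height $\mathrm{h}(G)$ is the least $h$ with $\mathbf{F}_h(G)=G$. For $1\le i\le \mathrm{h}(G)$, $\mathrm{r}_i(G)$ is the minimum size of a generating set of $\mathbf{F}_i(G)/\mathbf{F}_{i-1}(G)$, and $\mathrm{r}(G)=\sum_{i=1}^{\mathrm{h}(G)}\mathrm{r}_i(G)$. $\Phi(G)$ denotes the Frattini subgroup. *)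

(* Defs.v *)
From HB Require Import structures.
From mathcomp Require Import all_boot all_order all_algebra all_fingroup all_solvable all_field all_character.
Set Implicit Arguments. Unset Strict Implicit. Unset Printing Implicit Defensive.
Import Order.TTheory GRing.Theory Num.Theory.
Local Open Scope group_scope.

Definition satisfies_H (gT : finGroupType) (G : {group gT}) (k : nat) : Prop :=
  exists C : {set {set gT}},
    [/\ C \subset classes G, #|C| <= k &
        forall i : Iirr G, (1 < ('chi[G]_i)%R 1%g)%R ->
          exists2 K, K \in C & forall x, x \in K -> ('chi[G]_i)%R x = 0%R].

Fixpoint Fitting_series (gT : finGroupType) (G : {group gT}) (i : nat)
  : {group gT} :=
  match i with
  | 0 => 1%G
  | i'.+1 => (coset (Fitting_series G i') @*^-1 'F(G / Fitting_series G i'))%G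
  end.

Lemma gen_rank_ex (gT : finGroupType) (A : {group gT}) :
  exists n, [exists X : {set gT}, (#|X| == n) && (<<X>> == A)].
Proof. exists #|A|; apply/existsP; exists (A : {set gT}); by rewrite eqxx genGid eqxx. Qed.

Definition gen_rank (gT : finGroupType) (A : {group gT}) : nat :=
  ex_minn (gen_rank_ex A).

Definition fitting_r (gT : finGroupType) (G : {group gT}) (i : nat) : nat :=
  gen_rank (Fitting_series G i / Fitting_series G i.-1)%G.

(* Main.v *)
Require Import Defs.
From HB Require Import structures.
From mathcomp Require Import all_boot all_order all_algebra all_fingroup all_solvable all_field all_character.
From mathcomp Require Import zify.
Set Implicit Arguments. Unset Strict Implicit. Unset Printing Implicit Defensive.
Import Order.TTheory GRing.Theory Num.Theory.
Local Open Scope group_scope.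
Local Open Scope ring_scope.

Lemma center_case (gT : finGroupType) (H L : {group gT}) (X : {set gT}) (i : Iirr H) :
  L <| H -> nilpotent (H / L)%g -> X \subset H -> H \subset <<X :|: L>>%g ->
  L \subset 'Z('chi_i)%CF -> 1 < 'chi_i 1%g ->
  exists2 x, x \in X & 'chi_i x = 0.
Proof.
move=> nsLH nilHL sXH genH sLZ chi1.
set chi := 'chi_i in chi1 *.
set Z := 'Z(chi)%CF in sLZ *.
set K := cfker chi.
have nsZH : Z <| H := cfcenter_normal chi.
have nsKH : K <| H := cfker_normal chi.
have nsKZ : K <| Z := cfker_center_normal chi.
have nKH := normal_norm nsKH.
have ZneH : ~~ (H \subset Z).
  apply: contraL chi1 => sHZ.
  have eZH : Z = H by apply/eqP; rewrite eqEsubset sHZ normal_sub.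
  have := irr1_bound i; rewrite -/chi -/Z eZH indexgg => -[le1 _].
  move: le1; rewrite /chi irr1_degree -natrX ler_nat ltr1n => h; apply/negP => h2; rewrite expnS expn1 in h; nia.
have nilHZ : nilpotent (H / Z)%g.
  by rewrite -(isog_nil (third_isog sLZ nsLH nsZH)) quotient_nil.
have ntHZ : (H / Z)%g != 1%g.
  by apply: contra ZneH => /eqP e; rewrite -quotient_sub1 ?normal_norm // e.
have : 'Z(H / Z)%g != 1%g by rewrite center_nil_eq1.
case/trivgPn=> _ /setIP[/morphimP[y Ny Hy ->] cy] ny1.
have yZ : y \notin Z by apply/negP => yZ; move: ny1; rewrite /= coset_id ?eqxx.
have commZ : forall g, g \in H -> [~ g, y] \in Z.
  move=> g Hg; have Ng := subsetP (normal_norm nsZH) g Hg.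
  apply: coset_idr; first by rewrite groupR.
  rewrite morphR //; apply/eqP/commgP/commute_sym.
  by apply: (centP cy); rewrite mem_quotient.
pose S := (H :&: coset K @*^-1 'C[coset K y])%G.
have Ny' : y \in 'N(K) := subsetP nKH y Hy.
have inS : forall x, x \in H -> [~ x, y] \in K -> x \in S.
  move=> x Hx zK; rewrite inE Hx /=; apply/morphpreP; split; first exact: (subsetP nKH x Hx).
  apply/cent1P/commgP; rewrite /= -morphR ?(subsetP nKH x Hx) //.
  by apply/eqP; apply: coset_id.
have claim1 : forall x, x \in H -> chi x != 0 -> x \in S.
  move=> x Hx nz_chi_x; apply: inS => //.
  have := commZ x Hx; set z := [~ x, y].
  rewrite /K /Z /chi -irrRepr cfker_repr cfcenter_repr !inE in nz_chi_x *.
  case/andP=> Gz /is_scalar_mxP[c Chi_z]; rewrite Gz Chi_z mul1mx /=.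
  apply/eqP; congr _%:M; apply: (mulIf nz_chi_x); rewrite mul1r.
  rewrite -{2}(cfunJ _ x Hy) conjg_mulR -/z !cfunE Hx groupM // !{1}mulrb.
  by rewrite repr_mxM // Chi_z mul_mx_scalar mxtraceZ.
have sLS : L \subset S.
  apply/subsetP=> l Ll; have Zl := subsetP sLZ l Ll.
  have Hl := subsetP (normal_sub nsLH) l Ll.
  have Nl := subsetP nKH l Hl.
  apply: inS => //; apply: coset_idr; first by rewrite groupR.
  rewrite morphR //; apply/eqP/commgP.
  have : coset K l \in 'Z(H / K)%g.
    by apply: (subsetP (cfcenter_subset_center chi)); rewrite mem_quotient.
  case/setIP=> _ /centP; apply; by rewrite mem_quotient.
have [/exists_inP[x Xx /eqP] | ] := boolP [exists x in X, chi x == 0].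
  by exists x.
rewrite negb_exists_in => /forall_inP allnz; exfalso.
have sHS : H \subset S.
  apply: subset_trans genH _; rewrite gen_subG subUset sLS andbT.
  by apply/subsetP=> x Xx; apply: claim1; [apply: (subsetP sXH) | apply: allnz].
have : coset K y \in 'Z(H / K)%g.
  rewrite inE mem_quotient //=; apply/centP=> _ /morphimP[g Ng Hg ->].
  have := subsetP sHS g Hg; rewrite inE => /andP[_ /morphpreP[_ /cent1P]].
  by [].
rewrite -cfcenter_eq_center -/chi -/K -/Z => /morphimP[z Nz Zz].
move/(rcoset_kercosetP Ny' Nz) => /rcosetP[k Kk yE].
by move: yZ; rewrite yE groupM // (subsetP (normal_sub nsKZ)).
Qed.

Lemma nil_normal_over (gT : finGroupType) (H L T : {group gT}) :
  L <| H -> nilpotent (H / L)%g -> L \subset T -> T \proper H ->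
  exists M : {group gT}, [/\ M <| H, M \proper H & T \subset M].
Proof.
move=> nsLH nilHL sLT prTH.
have [M /maxgroupP[prMH maxM] sTM] :=
  @maxgroup_exists _ (fun M : {group gT} => M \proper H) T prTH.
exists M; split=> //.
have sMH := proper_sub prMH.
have sLM := subset_trans sLT sTM.
have nsLM : L <| M := normalS sLM sMH nsLH.
rewrite /normal sMH /=.
apply/negPn/negP => nHM.
have prN : 'N_H(M) \proper H.
  rewrite properEneq subsetIl andbT; apply: contra nHM => /eqP <-.
  exact: subsetIr.
have eN : 'N_H(M) = M.
  by apply: (maxM [group of 'N_H(M)]) => //; rewrite subsetI sMH normG.
have prML : (M / L)%g \proper (H / L)%g by rewrite quotient_proper.
have := nilpotent_proper_norm nilHL prML.
by rewrite -quotient_subnormG // eN properxx.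
Qed.

Lemma core (gT : finGroupType) (H L : {group gT}) (X Y : {set gT}) :
  L <| H -> nilpotent (H / L)%g -> X \subset H -> H \subset <<X :|: L>>%g ->
  Y \subset L ->
  (forall t : Iirr L, 1 < 'chi_t 1%g -> exists2 y, y \in Y & 'chi_t y = 0) ->
  forall i : Iirr H, 1 < 'chi_i 1%g -> exists2 x, x \in X :|: Y & 'chi_i x = 0.
Proof.
move=> nsLH nilHL sXH genH sYL IH i chi1.
have sLH := normal_sub nsLH.
have [t tc] := constt_cfRes_irr L i.
have [inv | ninv] := boolP (H \subset 'I_H['chi_t]).
  have DchiL : 'Res[L] 'chi_i = '['Res[L] 'chi_i, 'chi_t] *: 'chi_t.
    by rewrite {1}(Clifford_Res_sum_cfclass nsLH tc) (cfclass_invariant (subset_trans inv (subsetIr _ _))) /seq_of_cfun big_seq1.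
  have [t1 | t1] := boolP (1 < 'chi_t 1%g).
    have [y Yy ty] := IH t t1; exists y; first by rewrite inE Yy orbT.
    have Ly := subsetP sYL y Yy.
    by rewrite -(cfResE _ sLH Ly) DchiL cfunE ty mulr0.
  have lin : 'chi_t \is a linear_char.
    rewrite qualifE/= irr_char /=; move: t1; rewrite irr1_degree ltr1n pnatr_eq1.
    have := irr1_gt0 t; rewrite irr1_degree ltr0n; lia.
  have Ne : '['Res[L] 'chi_i, 'chi_t] \in Num.nat.
    by rewrite Cnat_cfdot_char ?cfRes_char ?irr_char.
  have sLZ : L \subset 'Z('chi_i)%CF.
    apply/subsetP => l Ll; rewrite irr_cfcenterE ?(subsetP sLH) //.
    rewrite -!(cfResE _ sLH) ?group1 // DchiL !cfunE normrM normC_lin_char //.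
    by rewrite lin_char1 // ger0_norm ?natr_ge0.
  have [x Xx chix] := center_case nsLH nilHL sXH genH sLZ chi1.
  by exists x; rewrite ?inE ?Xx.
set T := 'I_H['chi_t]%G.
have sTH : T \subset H := Inertia_sub H 'chi_t.
have prTH : T \proper H by rewrite properE sTH.
have sLT : L \subset T := sub_Inertia 'chi_t sLH.
have [M [nsMH prMH sTM]] := nil_normal_over nsLH nilHL sLT prTH.
have iB : i \in irr_constt ('Ind[H] 'chi_t) by rewrite constt_Ind_Res.
have [irrA _ imB _ _] := constt_Inertia_bijection t nsLH.
rewrite -imB in iB; case/imsetP: iB => s sA Di.
have Dchi : 'chi_i = 'Ind[H] 'chi_s by rewrite Di /Ind_Iirr cfIirrE ?irrA.
have van : forall x, x \in H -> x \notin M -> 'chi_i x = 0.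
  move=> x Hx Mx; rewrite Dchi cfIndE // big1 ?mulr0 // => y Hy.
  apply: cfun0; apply: contra Mx => Txy.
  rewrite -(memJ_norm x (subsetP (normal_norm nsMH) y Hy)).
  exact: subsetP sTM _ Txy.
have [/exists_inP[x Xx Mx] | ] := boolP [exists x in X, x \notin M].
  by exists x; [rewrite inE Xx | apply: van => //; apply: (subsetP sXH)].
rewrite negb_exists_in => /forall_inP allM; exfalso.
move/proper_subn: prMH => /negP; apply.
apply: subset_trans genH _; rewrite gen_subG subUset (subset_trans sLT sTM) andbT.
by apply/subsetP=> x Xx; have := allM x Xx; rewrite negbK.
Qed.

Definition gset (rT : finGroupType) (A : {group rT}) : {set rT} :=
  odflt set0 [pick S : {set rT} | (#|S| == Defs.gen_rank A) && (<<S>>%g == A)].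

Lemma gsetP (rT : finGroupType) (A : {group rT}) :
  #|gset A| = Defs.gen_rank A /\ <<gset A>>%g = A.
Proof.
rewrite /gset; case: pickP => [S /andP[/eqP -> /eqP ->] | none] //.
exfalso; move: (none); rewrite /Defs.gen_rank; case: (ex_minnP (gen_rank_ex A)) => n.
by case/existsP=> S /andP[cS gS] _ /(_ S); rewrite cS gS.
Qed.

Lemma gen_rank_le (rT : finGroupType) (A : {group rT}) (S : {set rT}) :
  <<S>>%g = A -> (Defs.gen_rank A <= #|S|)%N.
Proof.
move=> gS; rewrite /Defs.gen_rank; case: (ex_minnP (gen_rank_ex A)) => n _; apply.
by apply/existsP; exists S; rewrite eqxx gS eqxx.
Qed.

Definition lift (gT : finGroupType) (K : {group gT}) (A : {group coset_of K}) :
  {set gT} := (fun x : coset_of K => repr x) @: gset A.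

Lemma liftP (gT : finGroupType) (K F : {group gT}) : K <| F ->
  [/\ lift (F / K)%G \subset F, (#|lift (F / K)%G| <= Defs.gen_rank (F / K)%G)%N
    & F \subset <<lift (F / K)%G :|: K>>%g].
Proof.
move=> nsKF; have [sKF nKF] := andP nsKF.
have [cS gS] := gsetP (F / K)%G.
have sSQ : gset (F / K)%G \subset (F / K)%g by rewrite -gS subset_gen.
have sLF : lift (F / K)%G \subset F.
  apply/subsetP=> _ /imsetP[x Sx ->].
  rewrite -(quotientGK nsKF); apply/morphpreP; split; first exact: repr_coset_norm.
  by rewrite /= coset_reprK (subsetP sSQ).
split=> //; first by rewrite -cS leq_imset_card.
set W := <<_ :|: _>>%g.
have sWF : W \subset F by rewrite gen_subG subUset sLF sKF.
have sKW : (K : {set gT}) \subset W by rewrite sub_gen // subsetUr.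
have nsKW : K <| W := normalS sKW sWF nsKF.
apply: (@subset_trans _ _ (coset K @*^-1 (<<lift (F / K)%G :|: K>> / K))%g).
  rewrite -{1}(quotientGK nsKF) morphpreS //.
  rewrite -gS gen_subG; apply/subsetP=> x Sx.
  rewrite -[x]coset_reprK mem_quotient // mem_gen // inE.
  by apply/orP; left; apply/imsetP; exists x.
by rewrite (quotientGK nsKW).
Qed.

Lemma FS_normal (gT : finGroupType) (G : {group gT}) j : Fitting_series G j <| G.
Proof.
elim: j => [|j IHj] /=; first exact: normal1.
by rewrite -{2}(quotientGK IHj) cosetpre_normal Fitting_normal.
Qed.

Lemma FS_step (gT : finGroupType) (G : {group gT}) j :
  [/\ Fitting_series G j <| Fitting_series G j.+1,
      nilpotent (Fitting_series G j.+1 / Fitting_series G j)%g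
    & Fitting_series G j \subset Fitting_series G j.+1].
Proof.
have nsj : Fitting_series G j <| Fitting_series G j.+1 by apply: normal_cosetpre.
split=> //; last exact: normal_sub.
by rewrite /= cosetpreK Fitting_nil.
Qed.

Definition Xs (gT : finGroupType) (G : {group gT}) k : {set gT} :=
  lift (Fitting_series G k / Fitting_series G k.-1)%G.

Definition Us (gT : finGroupType) (G : {group gT}) j : {set gT} :=
  \bigcup_(1 <= k < j.+1) Xs G k.

Lemma chain (gT : finGroupType) (G : {group gT}) j :
  [/\ Us G j \subset Fitting_series G j,
      (#|Us G j| <= \sum_(1 <= k < j.+1) fitting_r G k)%N
    & forall t : Iirr (Fitting_series G j), 1 < 'chi_t 1%g ->
        exists2 y, y \in Us G j & 'chi_t y = 0].
Proof.
elim: j => [|j [sUF cU IH]].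
  rewrite /Us !big_geq //; split; rewrite ?sub0set ?cards0 // => t.
  have /char_abelianP lin : abelian (Fitting_series G 0) by apply: abelian1.
  by rewrite lin_char1 ?lin // ltxx.
have [nsj nilj sj] := FS_step G j.
have [sX cX gX] := liftP nsj.
have eU : Us G j.+1 = Us G j :|: Xs G j.+1 by rewrite /Us big_nat_recr.
split.
- by rewrite eU subUset sX (subset_trans sUF sj).
- rewrite eU big_nat_recr //=; apply: leq_trans (leq_card_setU _ _) _.
  exact: leq_add.
- move=> t t1; have [x Xx tx] := core nsj nilj sX gX sUF IH t1.
  by exists x; rewrite // eU setUC.
Qed.

Lemma two_gen (rT : finGroupType) (p : nat) (Q : {group rT}) :
  prime p -> p.-group Q -> #|Q| = (p ^ 2)%N ->
  exists2 S : {set rT}, (#|S| <= 2)%N & <<S>>%g = Q.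
Proof.
move=> pr pQ cQ; have p1 := prime_gt1 pr.
have ntQ : Q :!=: 1%g.
  apply/eqP => Q1; move: cQ; rewrite Q1 cards1 expnS expn1 => e; nia.
case/trivgPn: ntQ => a Qa a1.
have [sQa | ] := boolP (Q \subset <[a]>%g).
  exists [set a]; first by rewrite cards1.
  by apply/eqP; rewrite eqEsubset sQa andbT; rewrite -[<<_>>%g]/(<[a]>%g) cycle_subG.
case/subsetPn => b Qb nb.
exists [set a; b]; first by rewrite cards2; case: (a != b).
set W := <<[set a; b]>>%g.
have sWQ : W \subset Q by rewrite gen_subG; apply/subsetP=> x /set2P[]->.
have sAW : <[a]>%g \subset W by rewrite cycle_subG mem_gen // set21.
have prAW : <[a]>%g \proper W.
  by rewrite properE sAW; apply/subsetPn; exists b => //; apply: mem_gen; rewrite set22.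
have sAQ : <[a]>%g \subset Q by rewrite cycle_subG.
have [k1 e1] := p_natP (pgroupS sAQ pQ).
have [k2 e2] := p_natP (pgroupS sWQ pQ).
have c1 : (1 < #|<[a]>%g|)%N by rewrite -orderE order_gt1.
have c2 := proper_card prAW.
rewrite e1 in c1 c2; rewrite e2 in c2.
rewrite -(expn0 p) ltn_exp2l // in c1; rewrite ltn_exp2l // in c2.
apply/eqP; rewrite eqEcard sWQ cQ e2 leq_exp2l //.
by apply: leq_trans c2.
Qed.

Local Close Scope ring_scope.

Theorem theorem3 :
  (forall (gT : finGroupType) (G : {group gT}),
      solvable G -> G :!=: 1 ->
      forall h : nat,
        Fitting_series G h = G ->
        (forall j, j < h -> Fitting_series G j != G) ->
        satisfies_H G (\sum_(1 <= i < h.+1) fitting_r G i)) /\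
  (forall (gT : finGroupType) (p : nat) (G : {group gT}),
      prime p -> p.-group G -> #|G / 'Phi(G)| = (p ^ 2)%N ->
      satisfies_H G 2).
Proof.
split.
  move=> gT G _ _ h Fh _.
  have [sUF cU IH] := chain G h.
  rewrite Fh in sUF IH.
  exists [set x ^: G | x in Us G h]%g; split.
  - apply/subsetP=> _ /imsetP[x Ux ->]; apply: mem_classes.
    exact: subsetP sUF x Ux.
  - exact: leq_trans (leq_imset_card _ _) cU.
  - move=> i i1; have [y Uy iy] := IH i i1.
    exists (y ^: G)%g; first exact: imset_f.
    by move=> x /imsetP[g Gg ->]; rewrite cfunJ.
move=> gT p G pr pG cQ.
have [S cS gS] := two_gen pr (quotient_pgroup _ pG) cQ.
have nsPG : 'Phi(G)%G <| G := Phi_normal G.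
have [sX cX gX] := liftP nsPG.
set X := lift _ in sX cX gX.
have gXG : <<X>>%g = G.
  apply: Phi_nongen; apply/eqP; rewrite eqEsubset /joing gen_subG subUset Phi_sub sX.
  by rewrite (subset_trans gX) // genS // setUC.
have core' := @core _ G 1%G X set0 (normal1 G) (quotient_nil _ (pgroup_nil pG)).
have gX1 : G \subset <<X :|: 1%G>>%g by rewrite -{1}gXG genS // subsetUl.
have IH1 : forall t : Iirr (1%G : {group gT}), (1 < 'chi_t 1%g)%R -> exists2 y, y \in (set0 : {set gT}) & ('chi_t y)%R = 0%R.
  move=> t; have /char_abelianP lin : abelian (1%G : {group gT}) by apply: abelian1.
  by rewrite lin_char1 ?lin // ltxx.
have cX2 : (#|X| <= 2)%N.
  by apply: leq_trans cX _; apply: leq_trans (gen_rank_le gS) cS.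
exists [set x ^: G | x in X]%g; split.
- apply/subsetP=> _ /imsetP[x Xx ->]; apply: mem_classes.
  exact: subsetP sX x Xx.
- exact: leq_trans (leq_imset_card _ _) cX2.
- move=> i i1; have [y Uy iy] := core' sX gX1 (sub0set _) IH1 i i1.
  rewrite setU0 in Uy.
  exists (y ^: G)%g; first exact: imset_f.
  by move=> x /imsetP[g Gg ->]; rewrite cfunJ.
Qed.
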